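(* Consider a repeated single-slot hybrid auction over time steps $t=0,1,2,\dots$. At each step each advertiser $j$ bids $(m_{jt},c_{jt})$ (per-impression and per-click), the auctioneer computes an index $q_{jt}=f(\mathcal{Q}_{jt})$, where $\mathcal{Q}_{jt}$ is the auctioneer's current (Bayes-updated) prior on advertiser $j$'s click-through rate and $f$ is an arbitrary fixed function, the effective bid is $R_{jt}=\max(m_{jt},c_{jt}q_{jt})$, the highest effective bid wins, and with $R_{-j}$ the highest competing effective bid, the winner pays $R_{-j}$ per impression if $m_{jt}>c_{jt}q_{jt}$ and $R_{-j}/q_{jt}$ per click otherwise. Advertiser $j$ has per-click value $v_j$ and its own Bayes-updated prior $\mathcal{P}_{jt}$ on its click-through rate with mean $p_{jt}$; both priors are updated after every impression advertiser $j$ receives, based on whether a click occurred. An advertiser is semi-myopic with discount factor $\gamma_b\in[0,1)$ if: its bid at each step depends on its current state $\langle v_j,\mathcal{P}_{jt},\mathcal{Q}_{jt}\rangle$ and on $R_{-j}$, which is revealed at each step; if advertiser $j$ received the impression at the previous step, $R_{-j}$ stays the same, and otherwise it changes adversarially; and the advertiser maximizes its expected discounted (by $\gamma_b$) gain (value $v_j$ per click minus payments, expectations taken with respect to its own prior) over the contiguous sequence of steps in which it keeps receiving the impression. Define the bidding index as follows. For priors $\mathcal{P},\mathcal{Q}$ and a parameter $W$, consider the game with discount factor $\gamma_b$ in which at each step $t\ge 0$, with current priors $\mathcal{P}_t$ (mean $p_t$) and $\mathcal{Q}_t$ (index $q_t=f(\mathcal{Q}_t)$), the advertiser may stop or continue;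 if it continues it gains $vp_t-W\min(1,p_t/q_t)$ in expectation, an impression is shown and both priors are updated with the observed click outcome. Let $\mathcal{W}(v,\mathcal{P},\mathcal{Q})$ be the largest $W$ for which the optimal expected discounted value of this game, starting from $\mathcal{P}_0=\mathcal{P},\mathcal{Q}_0=\mathcal{Q}$, is positive, and let $\mathcal{B}(v,\mathcal{P},\mathcal{Q})=\mathcal{W}(v,\mathcal{P},\mathcal{Q})\min(1,p_0/q_0)$. The bidding index strategy for advertiser $j$ is to bid, at each step $t$, $(B_{jt},B_{jt}/p_{jt})$ where $B_{jt}=\mathcal{B}(v_j,\mathcal{P}_{jt},\mathcal{Q}_{jt})$. Then the bidding index strategy is (weakly) dominant in the class of semi-myopic strategies.
   Context: Expectations in the game defining the bidding index are with respect to the advertiser's own prior $\mathcal{P}_t$ (the advertiser trusts its own prior but not the auctioneer's). The click outcome in each step of that game is distributed according to the advertiser's prior, and both priors are Bayes-updated with it. *)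

(* Defs.v *)
From mathcomp Require Import all_boot all_order all_algebra.
From mathcomp Require Import all_classical all_reals all_analysis.
Import Order.TTheory GRing.Theory Num.Theory.
Import numFieldNormedType.Exports.

Set Implicit Arguments.
Unset Strict Implicit.
Unset Printing Implicit Defensive.

Local Open Scope classical_set_scope.
Local Open Scope ring_scope.

(* Priors.  A prior on a click-through rate is a probability measure on R   *)
(* concentrated on [0,1].  Bayes updating is represented through histories: *)
(* the posterior of an initial prior P after the sequence h of observed     *)
(* click outcomes (true = click) has density (proportional to) lik h        *)
(* with respect to P.                                                       *)

Section Defs.
Context {R : realType}.

Definition lik (h : seq bool) (x : R) : R :=
  \prod_(b <- h) (if b then x else 1 - x).

Definition mass (P : probability R R) (h : seq bool) : R :=
  fine (\int[P]_x (lik h x)%:E).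

Definition posterior (P : probability R R) (h : seq bool) : set R -> \bar R :=
  fun A => ((\int[P]_(x in A) (lik h x)%:E) * ((mass P h)^-1)%:E)%E.

Definition post_mean (P : probability R R) (h : seq bool) : R :=
  mass P (true :: h) / mass P h.

Definition cond_prob (P : probability R R) (h h' : seq bool) : R :=
  mass P (h ++ h') / mass P h.

Definition qidx (f : (set R -> \bar R) -> R) (Q : probability R R)
  (h : seq bool) : R := f (posterior Q h).

Definition alive (s : seq bool -> bool) (h' : seq bool) : bool :=
  all (fun k => s (take k h')) (iota 0 (size h').+1).

Definition disc_sum (gamma : R) (P : probability R R) (h : seq bool)
  (s : seq bool -> bool) (g : seq bool -> R) : R :=
  limn (series (fun n : nat => \sum_(h' : n.-tuple bool)
     (gamma ^+ n * cond_prob P h h' * (alive s h')%:R * g (h ++ h')))).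

(* Stopping policy s : at relative history h' (all previous steps played),  *)
(* s h' = true means "continue".  Continuing at absolute history k gives    *)
(* expected gain  v p_k - W min(1, p_k / q_k).                             *)
Definition game_gain (f : (set R -> \bar R) -> R) (v W : R)
  (P Q : probability R R) (k : seq bool) : R :=
  v * post_mean P k - W * Num.min 1 (post_mean P k / qidx f Q k).

Definition game_policy_value (f : (set R -> \bar R) -> R) (gamma v W : R)
  (P Q : probability R R) (h : seq bool) (s : seq bool -> bool) : R :=
  disc_sum gamma P h s (game_gain f v W P Q).

Definition game_value (f : (set R -> \bar R) -> R) (gamma v W : R)
  (P Q : probability R R) (h : seq bool) : R :=
  sup (range (game_policy_value f gamma v W P Q h)).

Definition Windex (f : (set R -> \bar R) -> R) (gamma v : R)
  (P Q : probability R R) (h : seq bool) : R :=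
  sup [set W | 0 < game_value f gamma v W P Q h].

Definition Bindex (f : (set R -> \bar R) -> R) (gamma v : R)
  (P Q : probability R R) (h : seq bool) : R :=
  Windex f gamma v P Q h * Num.min 1 (post_mean P h / qidx f Q h).

(* A bid is a pair (m, c) : per-impression and per-click.                  *)
Definition eff_bid (q : R) (b : R * R) : R := Num.max b.1 (b.2 * q).

Definition wins (Rm q : R) (b : R * R) : bool := Rm < eff_bid q b.

Definition win_gain (v Rm q p : R) (b : R * R) : R :=
  v * p - (if b.2 * q < b.1 then Rm else Rm / q * p).

(* A semi-myopic strategy: the bid is a function of the current state,     *)
(* i.e. the posteriors (P_t, Q_t) (the value v is fixed), and of the       *)
(* revealed competing bid R_{-j}.                                          *)
Definition strategy := (set R -> \bar R) -> (set R -> \bar R) -> R -> R * R.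

(* The objective of a semi-myopic advertiser: expected (own prior)          *)
(* discounted gain over the contiguous run of steps, starting at the        *)
(* posteriors after h, during which it keeps winning; R_{-j} = Rm stays    *)
(* fixed during the run.  The bid at absolute history k is given by bid k.  *)
Definition run_value (f : (set R -> \bar R) -> R) (gamma v Rm : R)
  (P Q : probability R R) (h : seq bool) (bid : seq bool -> R * R) : R :=
  disc_sum gamma P h
    (fun h' => wins Rm (qidx f Q (h ++ h')) (bid (h ++ h')))
    (fun k => win_gain v Rm (qidx f Q k) (post_mean P k) (bid k)).

Definition strat_bid (sigma : strategy) (Rm : R) (P Q : probability R R)
  (k : seq bool) : R * R := sigma (posterior P k) (posterior Q k) Rm.

Definition index_bid (f : (set R -> \bar R) -> R) (gamma v : R)
  (P Q : probability R R) (k : seq bool) : R * R :=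
  (Bindex f gamma v P Q k, Bindex f gamma v P Q k / post_mean P k).

End Defs.

(* Main.v *)
Require Import Defs.
From mathcomp Require Import all_boot all_order all_algebra.
From mathcomp Require Import all_classical all_reals all_analysis.
From mathcomp Require lra ring measurable_realfun.
Import Order.TTheory GRing.Theory Num.Theory.

Local Open Scope classical_set_scope.
Local Open Scope ring_scope.

Module Helpers.
Import lra ring measurable_realfun.
Import numFieldNormedType.Exports.
Local Open Scope classical_set_scope.
Local Open Scope ring_scope.

Section A.
Variable R : realType.

Lemma mul_le_max (W c : R) : 0 < c -> c <= 1 -> W * c <= Num.max W 0.
Proof.
move=> c0 c1; rewrite le_max; have [W0|W0] := leP 0 W.
  by rewrite ler_piMr // ltW.
by apply/orP; right; rewrite pmulr_lle0 // ltW.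
Qed.

Lemma arith_eff (Rm Wi p q : R) : 0 <= Rm -> 0 < p -> 0 < q ->
  (Rm < Num.max (Wi * Num.min 1 (p / q)) (Wi * Num.min 1 (p / q) / p * q)) = (Rm < Wi).
Proof.
move=> Rm0 p0 q0; set u := Num.min 1 (p / q).
have u0 : 0 < u by rewrite lt_min ltr01 divr_gt0.
have u1 : u <= 1 by rewrite ge_min lexx.
have upq : u <= p / q by rewrite ge_min lexx orbT.
have c0 : 0 < u / p * q by rewrite mulr_gt0 ?divr_gt0.
have c1 : u / p * q <= 1.
  rewrite mulrAC -mulrA; have qp0 : 0 <= q / p by rewrite divr_ge0 // ltW.
  apply: le_trans (ler_wpM2r qp0 upq) _.
  by rewrite -invf_div mulVf // lt0r_neq0 // divr_gt0.
have fromM : forall c, 0 < c -> c <= 1 -> Rm < Wi * c -> Rm < Wi.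
  move=> c cp cl H; have := lt_le_trans H (@mul_le_max Wi c cp cl).
  rewrite lt_max => /orP[//|]; rewrite ltNge Rm0 //.
apply/idP/idP.
  rewrite lt_max => /orP[H|H]; first exact: fromM u0 u1 H.
  by apply: (fromM _ c0 c1); rewrite mulrA mulrA.
move=> H; rewrite lt_max; have [qp|pq] := ltP q p.
  have -> : u = 1 by apply/min_l; rewrite ler_pdivlMr // mul1r ltW.
  by rewrite mulr1 H.
have -> : u = p / q by apply/min_r; rewrite ler_pdivrMr // mul1r.
apply/orP; right.
have -> : Wi * (p / q) / p * q = Wi by field; rewrite ?lt0r_neq0. exact: H.
Qed.

Lemma arith_gain (v Rm Wi p q : R) : 0 <= Rm -> 0 < p -> 0 < q -> Rm < Wi ->
  win_gain v Rm q p (Wi * Num.min 1 (p / q), Wi * Num.min 1 (p / q) / p) =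
  v * p - Rm * Num.min 1 (p / q).
Proof.
move=> Rm0 p0 q0 RW; have W0 : 0 < Wi by apply: le_lt_trans RW.
rewrite /win_gain /=; congr (_ - _); have [qp|pq] := ltP q p.
  have -> : Num.min 1 (p / q) = 1 by apply/min_l; rewrite ler_pdivlMr // mul1r ltW.
  rewrite mulr1 mulr1; have -> : Wi / p * q < Wi => //.
  by rewrite -mulrA gtr_pMr // mulrC ltr_pdivrMr // mul1r.
have -> : Num.min 1 (p / q) = p / q by apply/min_r; rewrite ler_pdivrMr // mul1r.
have -> : Wi * (p / q) / p * q = Wi by field; rewrite ?lt0r_neq0.
have -> : (Wi < Wi * (p / q)) = false.
  apply/negbTE; rewrite -leNgt; apply: ler_piMr; [exact: ltW | by rewrite ler_pdivrMr // mul1r].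
by ring.
Qed.

End A.


Section Mass.
Context {R : realType} (P : probability R R)
  (P01 : P `[0%R, 1%R]%classic = 1%E).

Let I := `[0%R, 1%R]%classic : set R.

Lemma lik_cons b h x : @lik R (b :: h) x = (if b then x else 1 - x) * lik h x.
Proof. by rewrite /lik big_cons. Qed.

Lemma lik_rcons b h x : @lik R (rcons h b) x = lik h x * (if b then x else 1 - x).
Proof. by rewrite /lik -cats1 big_cat /= big_seq1. Qed.

Lemma lik01 h x : I x -> 0 <= @lik R h x <= 1.
Proof.
rewrite /I /= in_itv /= => /andP[x0 x1].
elim: h => [|b h IH]; first by rewrite /lik big_nil ler01 lexx.
rewrite lik_cons; case/andP: IH => l0 l1.
have [c0 c1] : 0 <= (if b then x else 1 - x) /\ (if b then x else 1 - x) <= 1.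
  by case: b; split; lra.
apply/andP; split; first exact: mulr_ge0.
by have := ler_pM c0 l0 c1 l1; rewrite mulr1.
Qed.

Lemma mlik h : measurable_fun setT (@lik R h).
Proof.
apply: measurable_prod => b _; case: b => /=.
  exact: measurable_id.
by apply: measurable_realfun.measurable_funB; [exact: measurable_cst|exact: measurable_id].
Qed.

Lemma mI : measurable I.
Proof. exact: measurable_itv. Qed.

Lemma PIC0 : P (~` I) = 0%E.
Proof. by rewrite probability_setC ?P01 ?subee //; exact: mI. Qed.

Definition clamp (x : R) : R := Num.max 0 (Num.min 1 x).

Lemma clamp01 x : I (clamp x).
Proof.
rewrite /I /= in_itv /= /clamp; apply/andP; split; first by rewrite le_max lexx.
rewrite ge_max ler01 /=; by rewrite ge_min lexx.
Qed.

Lemma clampI x : I x -> clamp x = x.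
Proof.
rewrite /I /= in_itv /= /clamp => /andP[x0 x1].
by rewrite (min_r x1) (max_r x0).
Qed.

Lemma mclamp : measurable_fun setT clamp.
Proof.
apply: measurable_realfun.measurable_maxr; first exact: measurable_cst.
apply: measurable_realfun.measurable_minr; first exact: measurable_cst.
exact: measurable_id.
Qed.

Definition likc h x := @lik R h (clamp x).

Lemma mlikc h : measurable_fun setT (likc h).
Proof. exact: measurableT_comp (mlik h) mclamp. Qed.

Lemma likc01 h x : 0 <= likc h x <= 1.
Proof. exact: lik01 (clamp01 x). Qed.

Lemma massE h : (\int[P]_x (lik h x)%:E = \int[P]_x (likc h x)%:E)%E.
Proof.
apply: (ae_eq_integral (EFin \o likc h)) => //.
- by apply/measurable_realfun.measurable_EFinP; exact: mlik.
- by apply/measurable_realfun.measurable_EFinP; exact: mlikc.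
exists (~` I); split; first exact: measurableC mI.
  exact: PIC0.
move=> x /= Hx; apply: contrapT => Ix; apply: Hx => _.
by rewrite /likc clampI //; apply: contrapT.
Qed.

Local Open Scope ereal_scope.

Lemma mlikcE h : measurable_fun [set: R] (fun x : R => (likc h x)%:E).
Proof. by apply/measurable_realfun.measurable_EFinP; exact: mlikc. Qed.

Lemma intc_ge0 h : 0 <= \int[P]_x (likc h x)%:E.
Proof. by apply: integral_ge0 => x _; rewrite lee_fin; case/andP: (likc01 h x). Qed.

Lemma intc_le1 h : \int[P]_x (likc h x)%:E <= 1.
Proof.
apply: (@le_trans _ _ (\int[P]_x (cst 1 x))).
  apply: ge0_le_integral => //.
  - by move=> x _; rewrite lee_fin; case/andP: (likc01 h x).
  - exact: mlikcE.
  - by move=> x _; rewrite /= lee_fin; case/andP: (likc01 h x).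
by rewrite integral_cst // mul1e probability_le1.
Qed.

Lemma massEF h : (mass P h)%:E = \int[P]_x (likc h x)%:E.
Proof.
rewrite /mass massE fineK // ge0_fin_numE ?intc_ge0 //.
exact: le_lt_trans (intc_le1 h) (ltey _).
Qed.

Local Close Scope ereal_scope.

Lemma mass_ge0 h : 0 <= mass P h.
Proof. by rewrite -lee_fin massEF intc_ge0. Qed.

Lemma mass_le1 h : mass P h <= 1.
Proof. by rewrite -lee_fin massEF intc_le1. Qed.

Lemma mass_nil : mass P [::] = 1.
Proof.
apply/eqP; rewrite -(@eqe R) massEF.
have -> : (fun x => (likc [::] x)%:E) = (fun x => (cst 1%E x)).
  by apply/funext => x; rewrite /likc /lik big_nil.
rewrite integral_cst // mul1e; apply/eqP; exact: probability_setT.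
Qed.

Lemma mass_rcons h : mass P (rcons h true) + mass P (rcons h false) = mass P h.
Proof.
apply/eqP; rewrite -(@eqe R) EFinD !massEF -ge0_integralD //.
- apply/eqP; apply: eq_integral => x _.
  by rewrite /likc !lik_rcons -EFinD -mulrDr addrCA subrr addr0 mulr1.
- by move=> x _; rewrite lee_fin; case/andP: (likc01 (rcons h true) x).
- exact: mlikcE.
- by move=> x _; rewrite lee_fin; case/andP: (likc01 (rcons h false) x).
- exact: mlikcE.
Qed.

Lemma mass_cons_le h : mass P (true :: h) <= mass P h.
Proof.
rewrite -lee_fin !massEF; apply: ge0_le_integral => //.
- by move=> x _; rewrite lee_fin; case/andP: (likc01 (true :: h) x).
- exact: mlikcE.
- exact: mlikcE.
move=> x _; rewrite lee_fin /likc lik_cons /=.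
have := clamp01 x; rewrite /I /= in_itv /= => /andP[c0 c1].
case/andP: (@lik01 h (clamp x) (clamp01 x)) => l0 l1.
by rewrite -[leRHS]mul1r ler_wpM2r.
Qed.

End Mass.


Section Tup.
Variable R : ringType.
Lemma big_tupleS n (F : seq bool -> R) :
  \sum_(t : n.+1.-tuple bool) F t = \sum_(b : bool) \sum_(t : n.-tuple bool) F (b :: t).
Proof.
rewrite pair_big /=.
rewrite (reindex (fun p : bool * n.-tuple bool => [tuple of p.1 :: p.2])) //=.
exists (fun t : n.+1.-tuple bool => (thead t, [tuple of behead t])) => /=.
  by move=> [b t] _ /=; congr pair; apply: val_inj.
by move=> t _; apply: val_inj => /=; case: t => [[|x s] //=].
Qed.
Lemma big_tuple0 (F : seq bool -> R) :
  \sum_(t : 0.-tuple bool) F t = F [::].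
Proof. by rewrite (big_pred1 [tuple]) //= => t; rewrite /= tuple0; apply/esym/eqP. Qed.
End Tup.

Section Disc.
Context {R : realType} (P : probability R R).
Hypothesis m_ge0 : forall h, 0 <= mass P h.
Hypothesis m_rcons : forall h, mass P (rcons h true) + mass P (rcons h false) = mass P h.
Variable gamma : R.
Hypothesis gam0 : 0 <= gamma.
Hypothesis gam1 : gamma < 1.

Local Notation m := (mass P).

Lemma m_rcons_le h b : m (rcons h b) <= m h.
Proof.
rewrite -(m_rcons h); case: b; rewrite ?lerDl ?lerDr; exact: m_ge0.
Qed.

Lemma m_cat_le h t : m (h ++ t) <= m h.
Proof.
elim/last_ind: t => [|t b IH]; first by rewrite cats0.
by rewrite -rcons_cat; apply: le_trans (m_rcons_le _ _) IH.
Qed.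

Lemma m_cat0 h t : m h = 0 -> m (h ++ t) = 0.
Proof. by move=> H; apply/eqP; rewrite eq_le m_ge0 -H m_cat_le. Qed.

Lemma sum_mass n h : \sum_(t : n.-tuple bool) m (h ++ t) = m h.
Proof.
elim: n h => [|n IH] h; first by rewrite (big_tuple0 _ (fun t => m (h ++ t))) cats0.
rewrite (big_tupleS _ _ (fun t => m (h ++ t))) big_bool /=.
under eq_bigr do rewrite -cat_rcons.
under [X in _ + X]eq_bigr do rewrite -cat_rcons.
by rewrite !IH m_rcons.
Qed.

Definition pi h b := m (rcons h b) / m h.

Lemma pi_ge0 h b : 0 <= pi h b.
Proof. by rewrite /pi divr_ge0. Qed.

Lemma pi_sum h : pi h true + pi h false <= 1.
Proof.
rewrite /pi -mulrDl m_rcons; have [->|h0] := eqVneq (m h) 0; first by rewrite mul0r ler01.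
by rewrite divff.
Qed.

Lemma cp_ge0 h t : 0 <= cond_prob P h t.
Proof. by rewrite /cond_prob divr_ge0. Qed.

Lemma cp_sum n h : \sum_(t : n.-tuple bool) cond_prob P h t <= 1.
Proof.
rewrite /cond_prob -mulr_suml sum_mass.
have [->|h0] := eqVneq (m h) 0; first by rewrite mul0r ler01.
by rewrite divff.
Qed.

Lemma cp_cons h b t : cond_prob P h (b :: t) = pi h b * cond_prob P (rcons h b) t.
Proof.
rewrite /cond_prob /pi -cat_rcons.
have [H|H] := eqVneq (m (rcons h b)) 0.
  by rewrite (m_cat0 _ t H) H !mul0r.
by rewrite [RHS]mulrC -mulrA mulKf.
Qed.

Definition shift (s : seq bool -> bool) b := fun u => s (b :: u).

Lemma all_iotaS (p : pred nat) n :
  all p (iota 0 n.+1) = p 0%N && all (fun k => p k.+1) (iota 0 n).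
Proof. rewrite [iota 0 n.+1]/= -[iota 1 n]/(iota (1 + 0) n) iotaDl. by rewrite /= all_map. Qed.

Lemma alive_cons s b t : alive s (b :: t) = s [::] && alive (shift s b) t.
Proof. by rewrite /alive all_iotaS. Qed.

Lemma alive_nil s : alive s [::] = s [::].
Proof. by rewrite /alive /= andbT. Qed.

Definition term h s (g : seq bool -> R) n := \sum_(t : n.-tuple bool)
     (gamma ^+ n * cond_prob P h t * (alive s t)%:R * g (h ++ t)).

Lemma term0 h s g : term h s g 0 = m h / m h * (s [::])%:R * g h.
Proof. by rewrite /term (big_tuple0 _ (fun t => gamma ^+ 0 * cond_prob P h t * (alive s t)%:R * g (h ++ t))) /cond_prob alive_nil cats0 expr0 mul1r. Qed.

Lemma termS h s g n : term h s g n.+1 = (s [::])%:R * (gamma *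
  (pi h true * term (rcons h true) (shift s true) g n +
   pi h false * term (rcons h false) (shift s false) g n)).
Proof.
rewrite /term (big_tupleS _ _ (fun t => gamma ^+ n.+1 * cond_prob P h t * (alive s t)%:R * g (h ++ t))) big_bool /= -big_split /= !mulr_sumr -big_split /= !mulr_sumr.
apply: eq_bigr => t _.
rewrite !cp_cons !alive_cons -!cat_rcons exprS.
by case: (s [::]) => /=; rewrite ?mulr0 ?mul0r ?mul1r //; ring.
Qed.

Lemma term_bound h s g C n : (forall k, `|g k| <= C) ->
  `|term h s g n| <= C * gamma ^+ n.
Proof.
move=> gC; rewrite /term; apply: le_trans (ler_norm_sum _ _ _) _.
apply: (@le_trans _ _ (\sum_(t : n.-tuple bool) (C * gamma ^+ n) * cond_prob P h t)).
  apply: ler_sum => t _.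
  have C0 : 0 <= C by apply: le_trans (gC [::]).
  have a01 : 0 <= ((alive s t)%:R : R) <= 1 by case: (alive s t); rewrite /= ?lexx ?ler01.
  case/andP: a01 => a0 a1.
  rewrite normrM ger0_norm ?mulr_ge0 ?exprn_ge0 ?invr_ge0 ?m_ge0 ?cp_ge0 //.
  apply: (@le_trans _ _ (gamma ^+ n * cond_prob P h t * (alive s t)%:R * C)).
    by rewrite ler_wpM2l ?mulr_ge0 ?exprn_ge0 ?invr_ge0 ?m_ge0 ?cp_ge0.
  rewrite mulrC !mulrA ler_piMr // ?mulr_ge0 ?exprn_ge0 ?invr_ge0 ?m_ge0 ?cp_ge0 //.
rewrite -mulr_sumr; have C0 : 0 <= C by apply: le_trans (gC [::]).
by rewrite -[X in _ <= X]mulr1 ler_wpM2l ?mulr_ge0 ?exprn_ge0 ?cp_sum.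
Qed.

Lemma term_cvg h s g C : (forall k, `|g k| <= C) -> cvgn (series (term h s g)).
Proof.
move=> gC; apply: normed_cvg.
have C0 : 0 <= C by apply: le_trans (gC [::]).
apply: (@series_le_cvg _ _ (geometric C gamma)).
- by move=> n; exact: normr_ge0.
- by move=> n; rewrite /geometric /= mulr_ge0 ?exprn_ge0.
- by move=> n; exact: term_bound.
- by apply: is_cvg_geometric_series; rewrite ger0_norm.
Qed.

Lemma dsE h s g : disc_sum gamma P h s g = limn (series (term h s g)).
Proof. by []. Qed.

Lemma ds_rec h s g C : (forall k, `|g k| <= C) ->
  disc_sum gamma P h s g = (s [::])%:R * (m h / m h * g h + gamma *
   (pi h true * disc_sum gamma P (rcons h true) (shift s true) g +
    pi h false * disc_sum gamma P (rcons h false) (shift s false) g)).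
Proof.
move=> gC; rewrite !dsE.
have cu := term_cvg h s g C gC.
have ct := term_cvg (rcons h true) (shift s true) g C gC.
have cf := term_cvg (rcons h false) (shift s false) g C gC.
set u := term h s g; set ut := term (rcons h true) (shift s true) g.
set uf := term (rcons h false) (shift s false) g.
have c1 : (fun n => pi h true * series ut n) @ \oo --> pi h true * limn (series ut).
  by apply: cvgMl_tmp.
have c2 : (fun n => pi h false * series uf n) @ \oo --> pi h false * limn (series uf).
  by apply: cvgMl_tmp.
have c3 : (fun n => pi h true * series ut n + pi h false * series uf n) @ \oo -->
    pi h true * limn (series ut) + pi h false * limn (series uf).
  exact: cvgD c1 c2.
have c4 : (fun n => (s [::])%:R * gamma * (pi h true * series ut n + pi h false * series uf n)) @ \oo -->
    (s [::])%:R * gamma * (pi h true * limn (series ut) + pi h false * limn (series uf)).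
  by apply: cvgMl_tmp.
have c5 : (fun n => u 0%N + (s [::])%:R * gamma * (pi h true * series ut n + pi h false * series uf n)) @ \oo -->
    u 0%N + (s [::])%:R * gamma * (pi h true * limn (series ut) + pi h false * limn (series uf)).
  by apply: cvgD => //; exact: cvg_cst.
have E : (fun n => series u n.+1) = (fun n => u 0%N + (s [::])%:R * gamma *
    (pi h true * series ut n + pi h false * series uf n)).
  apply/funext => n; rewrite /series /= big_nat_recl //; congr (_ + _).
  under eq_bigr do rewrite /u termS.
  rewrite -!mulr_sumr big_split /= -!mulr_sumr.
  by rewrite mulrA.
have L : series u @ \oo --> u 0%N + (s [::])%:R * gamma *
    (pi h true * limn (series ut) + pi h false * limn (series uf)).
  by rewrite -cvg_shiftS /= E; exact: c5.
rewrite (cvg_lim _ L) // /u term0.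
ring.
Qed.

Lemma term_ncvg h s g C : (forall k, `|g k| <= C) ->
  cvgn (series (fun n => `|term h s g n|)).
Proof.
move=> gC; have C0 : 0 <= C by apply: le_trans (gC [::]).
apply: (@series_le_cvg _ _ (geometric C gamma)).
- by move=> n; exact: normr_ge0.
- by move=> n; rewrite /geometric /= mulr_ge0 ?exprn_ge0.
- by move=> n; exact: term_bound.
- by apply: is_cvg_geometric_series; rewrite ger0_norm.
Qed.

Lemma ds_bound h s g C : (forall k, `|g k| <= C) ->
  `|disc_sum gamma P h s g| <= C / (1 - gamma).
Proof.
move=> gC; rewrite dsE.
have cn := term_ncvg h s g C gC.
apply: le_trans (lim_series_norm cn) _.
have G : series (geometric C gamma) @ \oo --> C * (1 - gamma)^-1.
  by apply: cvg_geometric_series; rewrite ger0_norm.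
rewrite -(cvg_lim _ G) //.
apply: lim_series_le => //.
- by apply: is_cvg_geometric_series; rewrite ger0_norm.
- by move=> n; exact: term_bound.
Qed.

Lemma ds_cvg h s g C : (forall k, `|g k| <= C) -> cvgn (series (term h s g)).
Proof. exact: term_cvg. Qed.

Lemma term_le h s g1 g2 n : (forall k, g1 k <= g2 k) -> term h s g1 n <= term h s g2 n.
Proof.
move=> H; apply: ler_sum => t _; apply: ler_wpM2l; last exact: H.
by rewrite ?mulr_ge0 ?exprn_ge0 ?invr_ge0 ?m_ge0 ?ler0n.
Qed.

Lemma ds_le h s g1 g2 : cvgn (series (term h s g1)) -> cvgn (series (term h s g2)) ->
  (forall k, g1 k <= g2 k) -> disc_sum gamma P h s g1 <= disc_sum gamma P h s g2.
Proof.
move=> c1 c2 H; rewrite !dsE; apply: lim_series_le => // n; exact: term_le.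
Qed.

Lemma ds_add h s g d C D : (forall k, `|g k| <= C) -> (forall k, `|d k| <= D) ->
  disc_sum gamma P h s (fun k => g k + d k) = disc_sum gamma P h s g + disc_sum gamma P h s d.
Proof.
move=> gC dD; rewrite !dsE.
have E : term h s (fun k => g k + d k) = term h s g + term h s d.
  apply/funext => n /=.
  by rewrite -[RHS]/(term h s g n + term h s d n) /term -big_split /=; apply: eq_bigr => t _; rewrite mulrDr.
rewrite E seriesD limD //; [exact: term_cvg gC | exact: term_cvg dD].
Qed.
Lemma ds_false h g C : (forall k, `|g k| <= C) -> disc_sum gamma P h (fun=> false) g = 0.
Proof. by move=> gC; rewrite (ds_rec h _ g C gC) mul0r. Qed.


Variables (Q : probability R R) (f : (set R -> \bar R) -> R) (v : R).
Hypothesis f_pos : forall Qs, 0 < f Qs.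
Hypothesis m_cons_le : forall h, m (true :: h) <= m h.

Lemma pm01 k : 0 <= post_mean P k <= 1.
Proof.
rewrite /post_mean; have [->|k0] := eqVneq (m k) 0; first by rewrite invr0 mulr0 lexx ler01.
have mk : 0 < m k by rewrite lt0r k0 m_ge0.
by rewrite divr_ge0 ?m_ge0 //= ler_pdivrMr // mul1r.
Qed.

Lemma qq_gt0 k : 0 < qidx f Q k.
Proof. exact: f_pos. Qed.

Definition mu k := Num.min 1 (post_mean P k / qidx f Q k).

Lemma mu01 k : 0 <= mu k <= 1.
Proof.
rewrite /mu; apply/andP; split; last by rewrite ge_min lexx.
rewrite le_min ler01 /= divr_ge0 ?(ltW (qq_gt0 k)) //.
by case/andP: (pm01 k).
Qed.

Definition gg (W : R) := game_gain f v W P Q.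

Lemma ggE W k : gg W k = v * post_mean P k - W * mu k.
Proof. by []. Qed.

Lemma gg_bound W k : `|gg W k| <= `|v| + `|W|.
Proof.
rewrite ggE; apply: le_trans (ler_normB _ _) _.
case/andP: (pm01 k) => p0 p1; case/andP: (mu01 k) => u0 u1.
apply: lerD; rewrite normrM.
  by rewrite (ger0_norm p0) -[X in _ <= X]mulr1 ler_wpM2l.
by rewrite (ger0_norm u0) -[X in _ <= X]mulr1 ler_wpM2l.
Qed.

Definition JW (W : R) h s := game_policy_value f gamma v W P Q h s.
Definition VW (W : R) h := game_value f gamma v W P Q h.
Definition KW (W : R) := (`|v| + `|W|) / (1 - gamma).

Lemma JWE W h s : JW W h s = disc_sum gamma P h s (gg W).
Proof. by []. Qed.

Lemma JW_bound W h s : `|JW W h s| <= KW W.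
Proof. by rewrite JWE; apply: ds_bound; exact: gg_bound. Qed.

Lemma KW_ge0 W : 0 <= KW W.
Proof. by apply: divr_ge0; [rewrite addr_ge0|rewrite subr_ge0 ltW]. Qed.

Lemma JW_ub W h : has_ubound (range (JW W h)).
Proof.
exists (KW W) => _ [s _ <-]; apply: le_trans (ler_norm _) _; exact: JW_bound.
Qed.

Lemma JW_le_V W h s : JW W h s <= VW W h.
Proof. by apply: (ub_le_sup (JW_ub W h)); exists s. Qed.

Lemma JW_false W h : JW W h (fun=> false) = 0.
Proof. by rewrite JWE; apply: ds_false; exact: gg_bound. Qed.

Lemma V_ge0 W h : 0 <= VW W h.
Proof. by rewrite -(JW_false W h) JW_le_V. Qed.

Lemma V_le W h : VW W h <= KW W.
Proof.
apply: ge_sup; first by exists (JW W h (fun=> false)); exists (fun=> false).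
move=> _ [s _ <-]; apply: le_trans (ler_norm _) _; exact: JW_bound.
Qed.

Lemma JW_rec W h s : JW W h s = (s [::])%:R * (m h / m h * gg W h + gamma *
   (pi h true * JW W (rcons h true) (shift s true) +
    pi h false * JW W (rcons h false) (shift s false))).
Proof. by rewrite !JWE; apply: ds_rec; exact: gg_bound. Qed.

Lemma V_bell W h : 0 < VW W h -> VW W h <= m h / m h * gg W h + gamma *
   (pi h true * VW W (rcons h true) + pi h false * VW W (rcons h false)).
Proof.
set C := (X in _ <= X) => Vp.
suff : VW W h <= Num.max 0 C.
  by rewrite le_max => /orP[H|//]; move: Vp; rewrite ltNge H.
apply: ge_sup; first by exists (JW W h (fun=> false)); exists (fun=> false).
move=> _ [s _ <-]; change (JW W h s <= Num.max 0 C); rewrite JW_rec; case: (s [::]) => /=; last by rewrite mul0r le_max lexx.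
rewrite mul1r le_max; apply/orP; right; rewrite /C lerD2l ler_wpM2l //.
by apply: lerD; apply: ler_wpM2l; rewrite ?pi_ge0 ?JW_le_V.
Qed.


Definition sstar W h : seq bool -> bool := fun t => 0 < VW W (h ++ t).

Lemma shift_sstar W h b : shift (sstar W h) b = sstar W (rcons h b).
Proof. by apply/funext => t; rewrite /shift /sstar cat_rcons. Qed.

Definition Dl W h := VW W h - JW W h (sstar W h).

Lemma Dl_ge0 W h : 0 <= Dl W h.
Proof. by rewrite /Dl subr_ge0 JW_le_V. Qed.

Lemma Dl_le W h : Dl W h <= KW W + KW W.
Proof.
rewrite /Dl; have h1 := V_le W h.
have := JW_bound W h (sstar W h); rewrite ler_norml => /andP[h2 h3].
lra.
Qed.

Lemma arith1 (V a X Y : R) : V <= a + X -> V - (a + Y) <= X - Y.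
Proof. move=> H; lra. Qed.

Lemma Dl_rec W h : Dl W h <= gamma * (pi h true * Dl W (rcons h true) + pi h false * Dl W (rcons h false)).
Proof.
have [Vp|Vn] := ltP 0 (VW W h).
  have B := V_bell W h Vp.
  rewrite /Dl (JW_rec W h (sstar W h)) !shift_sstar.
  have -> : sstar W h [::] = true by rewrite /sstar cats0 Vp.
  rewrite mul1r.
  have -> : forall (pt pf Vt Vf Jt Jf : R), gamma * (pt * (Vt - Jt) + pf * (Vf - Jf)) =
    gamma * (pt * Vt + pf * Vf) - gamma * (pt * Jt + pf * Jf) by move=> *; ring.
  exact: arith1.
have V0 : VW W h = 0 by apply/eqP; rewrite eq_le Vn V_ge0.
rewrite /Dl (JW_rec W h (sstar W h)).
have -> : sstar W h [::] = false by rewrite /sstar cats0 V0 ltxx.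
rewrite V0 mul0r subr0.
by rewrite mulr_ge0 // addr_ge0 // mulr_ge0 ?pi_ge0 ?Dl_ge0.
Qed.

Lemma Dl_geom W n h : Dl W h <= (KW W + KW W) * gamma ^+ n.
Proof.
elim: n h => [|n IH] h; first by rewrite expr0 mulr1 Dl_le.
apply: le_trans (Dl_rec W h) _.
set B := (KW W + KW W) * gamma ^+ n.
have B0 : 0 <= B by rewrite mulr_ge0 ?exprn_ge0 ?addr_ge0 ?KW_ge0.
apply: (@le_trans _ _ (gamma * (pi h true * B + pi h false * B))).
  by rewrite ler_wpM2l // lerD // ler_wpM2l ?pi_ge0.
rewrite -mulrDl; apply: (@le_trans _ _ (gamma * B)).
  by rewrite ler_wpM2l // -[X in _ <= X]mul1r ler_wpM2r ?pi_sum.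
by rewrite /B exprS mulrCA lexx.
Qed.

Lemma Dl0 W h : Dl W h = 0.
Proof.
apply/eqP; rewrite eq_le Dl_ge0 andbT.
have L : (fun n => (KW W + KW W) * gamma ^+ n) @ \oo --> (KW W + KW W) * 0.
  by apply: cvgMl_tmp; apply: cvg_expr; rewrite ger0_norm.
rewrite mulr0 in L.
apply: (cvgr_to_ge L); near=> n; exact: Dl_geom.
Unshelve. all: by end_near.
Qed.

Lemma J_opt W h : JW W h (sstar W h) = VW W h.
Proof. by have := Dl0 W h; rewrite /Dl => /eqP; rewrite subr_eq0 => /eqP. Qed.


Lemma gg_mono W1 W2 k : W1 <= W2 -> gg W2 k <= gg W1 k.
Proof.
move=> W12; rewrite !ggE lerD2l lerN2 ler_wpM2r //.
by case/andP: (mu01 k).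
Qed.

Lemma JW_mono W1 W2 h s : W1 <= W2 -> JW W2 h s <= JW W1 h s.
Proof.
move=> W12; rewrite !JWE; apply: ds_le.
- exact: term_cvg (gg_bound W2).
- exact: term_cvg (gg_bound W1).
- by move=> k; exact: gg_mono.
Qed.

Lemma V_mono W1 W2 h : W1 <= W2 -> VW W2 h <= VW W1 h.
Proof.
move=> W12; apply: ge_sup; first by exists (JW W2 h (fun=> false)); exists (fun=> false).
move=> _ [s _ <-]; change (JW W2 h s <= VW W1 h).
exact: le_trans (@JW_mono W1 W2 h s W12) (JW_le_V W1 h s).
Qed.

Lemma V_lip W1 W2 h : W1 <= W2 -> VW W1 h - (W2 - W1) / (1 - gamma) <= VW W2 h.
Proof.
move=> W12; set d := (W2 - W1) / (1 - gamma).
suff : VW W1 h <= VW W2 h + d by move=> H; lra.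
apply: ge_sup; first by exists (JW W1 h (fun=> false)); exists (fun=> false).
move=> _ [s _ <-]; change (JW W1 h s <= VW W2 h + d).
have E : JW W2 h s = JW W1 h s + disc_sum gamma P h s (fun k => (W1 - W2) * mu k).
  rewrite !JWE -(@ds_add _ _ _ _ (`|v| + `|W1|) `|W1 - W2|); last 2 first.
  - exact: gg_bound.
  - move=> k; rewrite normrM -[X in _ <= X]mulr1 ler_wpM2l //.
    by case/andP: (mu01 k) => u0 u1; rewrite ger0_norm.
  by congr disc_sum; apply/funext => k; rewrite !ggE; ring.
have Bd : `|disc_sum gamma P h s (fun k => (W1 - W2) * mu k)| <= `|W1 - W2| / (1 - gamma).
  apply: ds_bound => k; rewrite normrM -[X in _ <= X]mulr1 ler_wpM2l //.
  by case/andP: (mu01 k) => u0 u1; rewrite ger0_norm.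
have : `|W1 - W2| = W2 - W1 by rewrite distrC ger0_norm // subr_ge0.
move=> N; rewrite N -/d ler_norml in Bd; case/andP: Bd => B1 B2.
have := JW_le_V W2 h s; rewrite E => H; lra.
Qed.

Lemma mu_gt0 k : 0 < post_mean P k -> 0 < mu k.
Proof. by move=> p0; rewrite /mu lt_min ltr01 /= divr_gt0 // qq_gt0. Qed.

Lemma V_big k : 0 < m k -> 0 < post_mean P k ->
  exists Wb, forall W, Wb <= W -> VW W k <= 0.
Proof.
move=> mk pk; have u0 := mu_gt0 k pk.
set K0 := KW 0.
have K00 : 0 <= K0 by exact: KW_ge0.
exists ((`|v| + K0) / mu k) => W WbW.
have W0 : 0 <= W by apply: le_trans WbW; rewrite divr_ge0 ?addr_ge0 // ltW.
have Wmu : `|v| + K0 <= W * mu k.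
  by rewrite -(divfK (lt0r_neq0 u0) (`|v| + K0)) ler_wpM2r // ltW.
apply: ge_sup; first by exists (JW W k (fun=> false)); exists (fun=> false).
move=> _ [s _ <-]; change (JW W k s <= 0); rewrite JW_rec.
case: (s [::]); last by rewrite mul0r.
rewrite mul1r divff ?lt0r_neq0 // mul1r.
have Jb : forall b, JW W (rcons k b) (shift s b) <= K0.
  move=> b; apply: le_trans (@JW_mono 0 W (rcons k b) (shift s b) W0) _.
  by apply: le_trans (ler_norm _) _; exact: JW_bound.
set pt := pi k true; set pf := pi k false.
have ps := pi_sum k; have pt0 := pi_ge0 k true; have pf0 := pi_ge0 k false.
have G : gamma * (pt * JW W (rcons k true) (shift s true) +
                 pf * JW W (rcons k false) (shift s false)) <= K0.
  apply: (@le_trans _ _ (gamma * (pt * K0 + pf * K0))).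
    by rewrite ler_wpM2l // lerD // ler_wpM2l.
  rewrite -mulrDl mulrA -[X in _ <= X]mul1r ler_wpM2r //.
  by apply: le_trans (ler_piMl _ _) ps; rewrite ?addr_ge0 // ltW.
have gk : gg W k <= `|v| - W * mu k.
  rewrite ggE lerD2r; apply: le_trans (ler_norm _) _; rewrite normrM.
  case/andP: (pm01 k) => p0 p1; rewrite (ger0_norm p0) -[X in _ <= X]mulr1 ler_wpM2l //.
lra.
Qed.


Lemma pm0_cat k t : post_mean P k = 0 -> post_mean P (k ++ t) = 0.
Proof.
rewrite /post_mean => H.
have [mk|mk] := eqVneq (m k) 0; first by rewrite (m_cat0 _ t mk) invr0 mulr0.
have mt : m (true :: k) = 0.
  by move/eqP: H; rewrite mulf_eq0 invr_eq0 (negbTE mk) orbF => /eqP.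
by rewrite -cat_cons (m_cat0 _ t mt) mul0r.
Qed.

Lemma gg_p0 W k : post_mean P k = 0 -> gg W k = 0.
Proof.
by move=> H; rewrite ggE /mu H mul0r mulr0 (min_r ler01) mulr0 subrr.
Qed.

Lemma V_p0 W k : post_mean P k = 0 -> VW W k <= 0.
Proof.
move=> H; apply: ge_sup; first by exists (JW W k (fun=> false)); exists (fun=> false).
move=> _ [s _ <-]; change (JW W k s <= 0); rewrite JWE dsE.
have -> : term k s (gg W) = fun=> 0.
  apply/funext => n; rewrite /term big1 // => t _.
  by rewrite gg_p0 ?mulr0 // pm0_cat.
have -> : series (fun=> (0 : R)) = fun=> 0.
  by apply/funext => n; rewrite /series /= big1.
by rewrite lim_cst.
Qed.

Lemma Windex_eq k Rm : 0 < m k -> 0 < post_mean P k -> 0 <= Rm ->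
  (Rm < Windex f gamma v P Q k) = (0 < VW Rm k).
Proof.
move=> mk pk Rm0.
have [Wb Hb] := V_big k mk pk.
set S := [set W | 0 < VW W k].
have SE : Windex f gamma v P Q k = sup S by [].
have ubS : has_ubound S.
  exists Wb => W SW; rewrite leNgt; apply/negP => /ltW /Hb; rewrite leNgt.
  by move/negP; apply.
rewrite SE; apply/idP/idP.
  move=> H.
  have [nS|nS] := pselect (S !=set0); last first.
    by move: H; rewrite sup_out ?ltNge ?Rm0 // => -[].
  have [y Sy Ry] := sup_gt nS H.
  exact: lt_le_trans Sy (@V_mono Rm y k (ltW Ry)).
move=> H; set W' := Rm + (1 - gamma) * VW Rm k / 2.
have g1' : 0 < 1 - gamma by rewrite subr_gt0.
have RW : Rm < W' by rewrite /W' ltrDl divr_gt0 // mulr_gt0.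
have E : (W' - Rm) / (1 - gamma) = VW Rm k / 2.
  rewrite /W'; field; rewrite lt0r_neq0 //.
have L := @V_lip Rm W' k (ltW RW); rewrite E in L.
have SW : S W' by rewrite /S /=; apply: lt_le_trans L; lra.
exact: lt_le_trans RW (ub_le_sup ubS SW).
Qed.


Lemma index_wins k Rm : 0 < m k -> 0 <= Rm ->
  wins Rm (qidx f Q k) (index_bid f gamma v P Q k) = sstar Rm [::] k.
Proof.
move=> mk Rm0; rewrite /sstar cat0s.
have [p0|pp] := eqVneq (post_mean P k) 0.
  rewrite ltNge V_p0 //= /wins /index_bid /Bindex /eff_bid /= p0.
  by rewrite mul0r (min_r ler01) !mulr0 invr0 mulr0 mul0r maxxx ltNge Rm0.
have pk : 0 < post_mean P k by rewrite lt0r pp; case/andP: (pm01 k).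
rewrite -Windex_eq // /wins /index_bid /Bindex /eff_bid /=.
exact: arith_eff Rm0 pk (qq_gt0 k).
Qed.

Lemma index_gain k Rm : 0 < m k -> 0 <= Rm -> sstar Rm [::] k ->
  win_gain v Rm (qidx f Q k) (post_mean P k) (index_bid f gamma v P Q k) = gg Rm k.
Proof.
move=> mk Rm0; rewrite /sstar cat0s => Vp.
have [p0|pp] := eqVneq (post_mean P k) 0.
  by move: Vp; rewrite ltNge V_p0.
have pk : 0 < post_mean P k by rewrite lt0r pp; case/andP: (pm01 k).
move: Vp; rewrite -Windex_eq // => RW.
rewrite /index_bid /Bindex ggE arith_gain //; exact: qq_gt0.
Qed.

Lemma index_value Rm : 0 <= Rm ->
  run_value f gamma v Rm P Q [::] (index_bid f gamma v P Q) = VW Rm [::].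
Proof.
move=> Rm0; rewrite -(J_opt Rm [::]) JWE /run_value !dsE.
congr (limn (series _)); apply/funext => n; rewrite /term; apply: eq_bigr => t _.
rewrite !cat0s.
have [m0|mt] := eqVneq (m t) 0.
  by rewrite /cond_prob cat0s m0 !mul0r !mulr0 !mul0r.
have mt0 : 0 < m t by rewrite lt0r mt m_ge0.
have Hpre : forall k, 0 < m (take k t).
  move=> k; apply: lt_le_trans mt0 _.
  by rewrite -{1}(cat_take_drop k t) m_cat_le.
have Ha : alive (fun h' => wins Rm (qidx f Q ([::] ++ h'))
              (index_bid f gamma v P Q ([::] ++ h'))) t = alive (sstar Rm [::]) t.
  by rewrite /alive; apply: eq_all => k /=; rewrite index_wins.
rewrite Ha; case Ha2: (alive (sstar Rm [::]) t); last by rewrite !mulr0 !mul0r.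
have St : sstar Rm [::] t.
  have := allP Ha2 (size t); rewrite mem_iota /= add0n ltnSn take_size; exact.
by rewrite index_gain.
Qed.

Lemma gain_le Rm k b : 0 <= Rm ->
  win_gain v Rm (qidx f Q k) (post_mean P k) b <= gg Rm k.
Proof.
move=> Rm0; rewrite /win_gain ggE lerD2l lerN2.
have q0 := qq_gt0 k; case/andP: (pm01 k) => p0 p1.
case: ifP => _.
  by rewrite -[X in _ <= X]mulr1 ler_wpM2l // ge_min lexx.
by rewrite -mulrA [_^-1 * _]mulrC ler_wpM2l // ge_min lexx orbT.
Qed.

Lemma sigma_le Rm sigma : 0 <= Rm ->
  run_value f gamma v Rm P Q [::] (strat_bid sigma Rm P Q) <= VW Rm [::].
Proof.
move=> Rm0; rewrite /run_value.
set s := (fun h' => _); set g := (fun k => _).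
have [c|nc] := pselect (cvgn (series (term [::] s g))).
  apply: le_trans (JW_le_V Rm [::] s); rewrite JWE.
  apply: ds_le => //; first exact: term_cvg (gg_bound Rm).
  by move=> k; rewrite /g gain_le.
rewrite dsE; have -> : limn (series (term [::] s g)) = 0.
  by have := @dvgP R _ nc; move=> ->.
exact: V_ge0.
Qed.

End Disc.

End Helpers.

Theorem theorem4 (R : realType) (f : (set R -> \bar R) -> R)
  (f_pos : forall Qs : set R -> \bar R, 0 < f Qs)
  (gamma : R) (gamma_ge0 : 0 <= gamma) (gamma_lt1 : gamma < 1)
  (v : R) (P Q : probability R R)
  (P01 : P `[0%R, 1%R]%classic = 1%E) (Q01 : Q `[0%R, 1%R]%classic = 1%E)
  (sigma : strategy) (Rm : R) (Rm_ge0 : 0 <= Rm) :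
  run_value f gamma v Rm P Q [::] (strat_bid sigma Rm P Q)
    <= run_value f gamma v Rm P Q [::] (index_bid f gamma v P Q).
Proof.
have mg0 := @Helpers.mass_ge0 R P P01.
have mrc := @Helpers.mass_rcons R P P01.
have mcl := @Helpers.mass_cons_le R P P01.
have H1 := @Helpers.sigma_le R P mg0 mrc gamma gamma_ge0 gamma_lt1 Q f v f_pos mcl Rm sigma Rm_ge0.
have H2 := @Helpers.index_value R P mg0 mrc gamma gamma_ge0 gamma_lt1 Q f v f_pos mcl Rm Rm_ge0.
by rewrite H2.
Qed.
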